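(* Consider the $k$-agent prophet game with random tie-breaking, and assume $n\ge k$. For every agent $i$, the single threshold strategy $T^k=\frac{1}{2k}\sum_{j=1}^{k}\mathbb{E}[y_j]$ guarantees agent $i$ an expected utility of at least $\frac{1}{2k}\mathbb{E}\big[\sum_{j=1}^{k}y_j\big]$, regardless of the strategies of the other agents.
   Context: Prophet game with competing agents: there are $n$ rewards $v_1,\ldots,v_n$, where $v_t$ is a non-negative real random variable drawn from a known distribution $F_t$ (with finite mean), independently across $t$. There are $k$ agents. At each time $t=1,\ldots,n$, the value $v_t$ is revealed to all agents, and every active agent (an agent who has not yet received a reward) decides whether to select $v_t$. If exactly one agent selects $v_t$, it is assigned to that agent. If several agents select it, it is assigned to one of them by the tie-breaking rule. Under random tie-breaking, the reward goes to a uniformly random agent among those selecting it. An agent who receives a reward becomes inactive, and unselected rewards are lost forever. A strategy of an agent is a (possibly randomized) rule that, for each $t$, decides whether to select $v_t$ based on $t$, the realized value $v_t$, and the set of currently active agents. The utility $u_i(S)$ of agent $i$ under strategy profile $S=(S_i,S_{-i})$ is her expected received reward (zero if she receives none). A strategy $S_i$ guarantees agent $i$ utility $\alpha$ if $u_i(S_i,S_{-i})\ge\alpha$ for every $S_{-i}$. The single threshold strategy $T$ selects $v_t$ if and only if the agent is still active and $v_t\ge T$. For $j=1,\ldots,n$, $y_j$ denotes the $j$-th largest value among $v_1,\ldots,v_n$. *)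

(* Defs.v *)
From HB Require Import structures.
From mathcomp Require Import all_boot all_order all_algebra.
From mathcomp Require Import all_classical all_reals all_analysis.
Set Implicit Arguments. Unset Strict Implicit. Unset Printing Implicit Defensive.
Import Order.TTheory GRing.Theory Num.Theory.
Local Open Scope ring_scope.
Local Open Scope ereal_scope.

Section Prophet.
Variable R : realType.
(* F t = distribution of v_{t+1} (times are 0-indexed: t = 0 .. n-1). *)
Variable F : nat -> probability R R.

(* Expectation of f(v_s, v_{s+1}, ..., v_{s+m-1}) for independent v_t ~ F t,
   written as the iterated integral over the product of the F t. *)
Fixpoint iexp (m s : nat) (f : seq R -> \bar R) : \bar R :=
  match m with
  | 0 => f [::]
  | m'.+1 => \int[F s]_x iexp m' s.+1 (fun l => f (x :: l))
  end.

Definition Exp (n : nat) (g : seq R -> \bar R) : \bar R := iexp n 0 g.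

(* y_j = j-th largest value (j >= 1) among the list of realized values. *)
Definition y (j : nat) (vs : seq R) : R := nth 0%R (sort (>=%R) vs) j.-1.

Definition Tk (n k : nat) : \bar R :=
  (((2 * k)%N%:R)^-1)%R%:E * \sum_(1 <= j < k.+1) Exp n (fun vs => (y j vs)%:E).

(* A (behavioral, possibly randomized) strategy profile for k agents:
   p j t v A = probability that agent j selects value v at time t when the set
   of active agents is A (agents randomize independently). *)
Definition profile (k : nat) := 'I_k -> nat -> R -> {set 'I_k} -> R.

Definition thr (k : nat) (T : \bar R) : nat -> R -> {set 'I_k} -> R :=
  fun _ v _ => if T <= v%:E then 1%R else 0%R.

Definition upd (k : nat) (p : profile k) (i : 'I_k)
  (si : nat -> R -> {set 'I_k} -> R) : profile k :=
  fun j => if j == i then si else p j.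

Definition psel (k : nat) (p : profile k) (t : nat) (v : R)
  (A S : {set 'I_k}) : R :=
  \prod_(j in A) (if j \in S then p j t v A else 1 - p j t v A)%R.

(* Expected utility of agent i from time t on, with m rewards remaining and
   active set A, under random tie-breaking. *)
Fixpoint util (k : nat) (p : profile k) (i : 'I_k) (m t : nat)
  (A : {set 'I_k}) : \bar R :=
  match m with
  | 0 => 0
  | m'.+1 =>
    if i \notin A then 0 else
    \int[F t]_v
      \sum_(S in powerset A)
        (psel p t v A S)%:E *
        (if #|S| == 0%N then util p i m' t.+1 A
         else \sum_(j in S) ((#|S|%:R)^-1)%:E *
                (if j == i then v%:E else util p i m' t.+1 (A :\ j)))
  end.

Definition utility (k : nat) (p : profile k) (i : 'I_k) (n : nat) : \bar R :=
  util p i n 0 [set: 'I_k].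

End Prophet.

(* Main.v *)
Require Import Defs.
From HB Require Import structures.
From mathcomp Require Import all_boot all_order all_algebra.
From mathcomp Require Import all_classical all_reals all_analysis.
From mathcomp Require Import zify ring lra.
From mathcomp Require Import measurable_realfun.
Import Order.TTheory GRing.Theory Num.Theory.
Local Open Scope ring_scope.
Section Ostat.
Variable (R : realDomainType).
Definition leR : rel R := fun a b => (a <= b)%R.
Definition geR : rel R := fun a b => (b <= a)%R.

Lemma geR_trans : transitive geR.
Proof. by move=> x y z h1 h2; exact: le_trans h2 h1. Qed.
Lemma geR_refl : reflexive geR.
Proof. by move=> x; exact: lexx. Qed.
Lemma geR_total : total geR.
Proof. by move=> x y; rewrite /geR orbC le_total. Qed.

Lemma count_ge (s : seq R) q c : sorted geR s -> (q < size s)%N ->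
  c <= nth 0 s q -> (q < count (fun x : R => (c <= x)%R) s)%N.
Proof.
elim: s q => [//|x s IH] [|q] /= hs hq hc.
  by rewrite hc.
have hs' : sorted geR s by move: hs; exact: path_sorted.
have hmin := order_path_min geR_trans hs.
have hx : c <= x.
  apply: le_trans hc _; move/allP: hmin; apply; exact: mem_nth.
by rewrite hx add1n ltnS IH.
Qed.

Lemma count_lt (s : seq R) q c : sorted geR s ->
  nth 0 s q < c -> (count (fun x : R => (c <= x)%R) s <= q)%N.
Proof.
elim: s q => [//|x s IH] [|q] /= hs hc.
  have hmin := order_path_min geR_trans hs.
  rewrite leNgt hc /= (eq_in_count (a2 := pred0)) ?count_pred0 //.
  move=> z zs /=; rewrite leNgt; apply/negbF.
  move/allP: hmin => /(_ z zs) hz; exact: le_lt_trans hz hc.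
have hs' : sorted geR s by move: hs; exact: path_sorted.
have := IH q hs' hc; case: (c <= x) => /=; lia.
Qed.

Lemma all2_count (l l' : seq R) c : all2 leR l l' ->
  (count (fun x : R => (c <= x)%R) l <= count (fun x : R => (c <= x)%R) l')%N.
Proof.
elim: l l' => [|x l IH] [|x' l'] //= /andP[hx hl].
have := IH _ hl; case hc: (c <= x); case hc': (c <= x') => /=; try lia.
by move: hc'; rewrite (le_trans hc hx).
Qed.

Lemma all2_size (l l' : seq R) : all2 leR l l' -> size l = size l'.
Proof. by elim: l l' => [|x l IH] [|x' l'] //= /andP[_ /IH ->]. Qed.

Lemma all2_nth (l l' : seq R) t : all2 leR l l' -> nth 0 l t <= nth 0 l' t.
Proof.
elim: l l' t => [|x l IH] [|x' l'] [|t] //= /andP[h1 h2]; first exact: h1.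
exact: IH.
Qed.

Lemma nth_le_sum (l : seq R) t : `|nth 0 l t| <= \sum_(x <- l) `|x|.
Proof.
elim: l t => [|x l IH] [|t] /=; rewrite ?big_nil ?big_cons ?normr0 //.
  by rewrite lerDl sumr_ge0.
by apply: le_trans (IH t) _; rewrite lerDr.
Qed.

Lemma ostat_mono (l l' : seq R) q : all2 leR l l' ->
  nth 0 (sort geR l) q <= nth 0 (sort geR l') q.
Proof.
move=> h; have hsz := all2_size _ _ h.
have [hq|hq] := leqP (size l) q.
  by rewrite !nth_default ?size_sort -?hsz.
set c := nth 0 (sort geR l) q.
have s1 := sort_sorted geR_total l.
have s2 := sort_sorted geR_total l'.
have p1 : perm_eq (sort geR l) l by rewrite perm_sort.
have p2 : perm_eq (sort geR l') l' by rewrite perm_sort.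
have c1 : (q < count (fun x : R => (c <= x)%R) (sort geR l))%N.
  by apply: count_ge => //; rewrite size_sort.
rewrite (permP p1) in c1.
have c2 := leq_trans c1 (all2_count _ _ c h).
rewrite -(permP p2) in c2.
rewrite leNgt; apply/negP => /(count_lt _ _ _ s2) h3.
by move: (leq_trans c2 h3); rewrite ltnn.
Qed.

Lemma ostat_bnd (l : seq R) q : `|nth 0 (sort geR l) q| <= \sum_(x <- l) `|x|.
Proof.
apply: le_trans (nth_le_sum _ q) _.
have p1 : perm_eq (sort geR l) l by rewrite perm_sort.
by rewrite (perm_big _ p1).
Qed.
End Ostat.

Local Open Scope ereal_scope.



Lemma intcst (R : realType) (F : probability R R) (c : R) :
  \int[F]_(x in setT) (EFin \o cst c) x = c%:E.
Proof.
have -> : (fun x => (EFin \o cst c) x) = cst c%:E by [].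
rewrite integral_cst //.
apply: (@eq_trans _ _ (c%:E * 1)); last by rewrite mule1.
congr (_ * _). exact: probability_setT.
Qed.

Section PartA.
Variable (R : realType) (F : nat -> probability R R) (n : nat).
Hypothesis hmean : forall t, (t < n)%N -> (F t).-integrable setT (fun x : R => x%:E).

Definition mono (f : seq R -> R) := forall l l', all2 (leR R) l l' -> (f l <= f l')%R.
Definition bnd (f : seq R -> R) (a b : R) :=
  forall l, (`|f l| <= a + b * \sum_(x <- l) `|x|)%R.
Definition good f := exists a b, (0 <= b)%R /\ mono f /\ bnd f a b.
Definition cm t := fine (\int[F t]_x (`|x|%:E)).
Definition J m s (f : seq R -> R) := fine (iexp F m s (fun l => (f l)%:E)).

Lemma int_abs t : (t < n)%N -> (F t).-integrable setT (fun x => (`|x|)%:E).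
Proof. by move=> /hmean/integrable_abse. Qed.

Lemma cm_fin t : (t < n)%N -> \int[F t]_x (`|x|%:E) = (cm t)%:E.
Proof. move=> tn; rewrite /cm fineK //. have := integrable_fin_num measurableT (int_abs _ tn). by []. Qed.

Lemma int_lin t c b : (t < n)%N ->
  (F t).-integrable setT (fun x => (c + b * `|x|)%R%:E).
Proof.
move=> tn.
have h : (F t).-integrable setT ((EFin \o cst c) \+ (fun x => b%:E * (`|x|)%:E))%E.
  apply: integrableD => //; first exact: finite_measure_integrable_cst.
  exact: integrableZl (int_abs _ tn).
apply: eq_integrable h => //= x _.
 
Qed.

Lemma int_lin_val t c b : (t < n)%N ->
  \int[F t]_x ((c + b * `|x|)%R%:E) = (c + b * cm t)%R%:E.
Proof.
move=> tn.
rewrite (eq_integral (fun x : R => (EFin \o cst c) x + b%:E * (`|x|)%:E)); last by move=> x _.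
rewrite integralD //; last first.
  exact: integrableZl (int_abs _ tn).
  exact: finite_measure_integrable_cst.
rewrite integralZl //; last exact: int_abs.
by rewrite cm_fin // intcst.
Qed.


Lemma all2_refl l : all2 (leR R) l l.
Proof. by elim: l => //= x l ->; rewrite andbT /leR lexx. Qed.

Lemma mono_cons f x : mono f -> mono (fun l => f (x :: l)).
Proof. by move=> mf l l' h; apply: mf => /=; rewrite /leR lexx. Qed.

Lemma bnd_cons f a b x : bnd f a b -> bnd (fun l => f (x :: l)) (a + b * `|x|)%R b.
Proof.
move=> bf l; apply: le_trans (bf (x :: l)) _; rewrite big_cons.
by rewrite mulrDr addrA.
Qed.

Lemma good_cons f x : good f -> good (fun l => f (x :: l)).
Proof.
case=> a [b [hb [mf bf]]]; exists (a + b * `|x|)%R, b; split => //; split.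
  exact: mono_cons. exact: bnd_cons.
Qed.

Lemma good_add f g : good f -> good g -> good (fun l => f l + g l)%R.
Proof.
case=> a [b [hb [mf bf]]]; case=> a' [b' [hb' [mg bg]]].
exists (a + a')%R, (b + b')%R; split; first exact: addr_ge0.
split; first by move=> l l' h; apply: lerD; [exact: mf|exact: mg].
move=> l; apply: le_trans (ler_normD _ _) _.
apply: le_trans (lerD (bf l) (bg l)) _.
by rewrite mulrDl addrACA.
Qed.

Lemma sum_ord_shift (c : nat -> R) s m :
  (\sum_(u < m.+1) c (s + u)%N = c s + \sum_(u < m) c (s.+1 + u)%N)%R.
Proof.
by rewrite big_ord_recl addn0; congr (_ + _)%R; apply: eq_bigr => u _; rewrite addSnnS.
Qed.

Definition PA m := forall s, (s + m <= n)%N ->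
  (forall f a b, (0 <= b)%R -> mono f -> bnd f a b ->
     iexp F m s (fun l => (f l)%:E) = (J m s f)%:E /\
     (`|J m s f| <= a + b * \sum_(u < m) cm (s + u)%N)%R)
  /\ (forall f g, good f -> good g -> (forall l, size l = m -> (f l <= g l)%R) ->
        (J m s f <= J m s g)%R)
  /\ (forall f g, good f -> good g ->
        J m s (fun l => f l + g l)%R = (J m s f + J m s g)%R).

Lemma PA0 : PA 0.
Proof.
move=> s _; split; last split.
- move=> f a b hb mf bf; rewrite /J /=; split => //.
  by apply: le_trans (bf [::]) _; rewrite big_nil big_ord0.
- by move=> f g _ _ h; rewrite /J /=; exact: h.
- by move=> f g _ _; rewrite /J /=.
Qed.

Lemma PAS m : PA m -> PA m.+1.
Proof.
move=> IH s hs.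
have hs' : (s.+1 + m <= n)%N by move: hs; clear; lia.
have sn : (s < n)%N by move: hs; clear; lia.
case: (IH _ hs') => I1 [I2 I3].
pose gx f x := J m s.+1 (fun l => f (x :: l)).
have E1 : forall f a b, (0 <= b)%R -> mono f -> bnd f a b ->
    iexp F m.+1 s (fun l => (f l)%:E) = \int[F s]_x (gx f x)%:E.
  move=> f a b hb mf bf /=; apply: eq_integral => x _.
  by have [-> _] := I1 _ _ _ hb (mono_cons _ x mf) (bnd_cons _ _ _ x bf).
have Bg : forall f a b, (0 <= b)%R -> mono f -> bnd f a b -> forall x,
    (`|gx f x| <= (a + b * \sum_(u < m) cm (s.+1 + u)%N) + b * `|x|)%R.
  move=> f a b hb mf bf x.
  have [_ H] := I1 _ _ _ hb (mono_cons _ x mf) (bnd_cons _ _ _ x bf).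
  by apply: le_trans H _; rewrite addrAC.
have Mg : forall f, good f -> {homo gx f : x y / (x <= y)%R}.
  move=> f gf x y xy; apply: I2; try exact: good_cons.
  move=> l _; case: gf => a [b [_ [mf _]]]; apply: mf => /=.
  by rewrite /leR xy all2_refl.
have Ig : forall f, good f -> (F s).-integrable setT (fun x => (gx f x)%:E).
  move=> f gf; have := gf; case=> a [b [hb [mf bf]]].
  apply: (le_integrable _ _ _ (int_lin _ (a + b * \sum_(u < m) cm (s.+1 + u)%N) b sn)) => //.
    apply/measurable_EFinP; apply: nondecreasing_measurable => //; exact: Mg.
  move=> x _ /=; rewrite lee_fin; apply: le_trans (Bg _ _ _ hb mf bf x) _.
  exact: ler_norm.
have Fin : forall f, good f -> iexp F m.+1 s (fun l => (f l)%:E) = (J m.+1 s f)%:E.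
  move=> f gf; have := gf; case=> a [b [hb [mf bf]]].
  rewrite /J (E1 _ _ _ hb mf bf) fineK //.
  exact: (integrable_fin_num measurableT (Ig _ gf)).
split; last split.
- move=> f a b hb mf bf.
  have gf : good f by exists a, b.
  split; first exact: Fin.
  rewrite -lee_fin -(abse_EFin (J _ _ _)) -Fin // (E1 _ _ _ hb mf bf).
  apply: le_trans (le_abse_integral _ _ _) _ => //.
    by apply/measurable_EFinP; apply: nondecreasing_measurable => //; exact: Mg.
  apply: le_trans (_ : _ <= \int[F s]_x ((a + b * \sum_(u < m) cm (s.+1 + u)%N) + b * `|x|)%R%:E) _.
    apply: ge0_le_integral => //.
    - by apply: measurableT_comp => //; apply/measurable_EFinP; apply: nondecreasing_measurable => //; exact: Mg.
    - exact: (measurable_int _ (int_lin _ _ _ sn)).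
    - by move=> x _; rewrite lee_fin; exact: (Bg _ _ _ hb mf bf).
  rewrite int_lin_val // lee_fin sum_ord_shift le_eqVlt; apply/orP; left; apply/eqP.
  ring.
- move=> f g gf gg h.
  have := gf; case=> a [b [hb [mf bf]]]; have := gg; case=> a' [b' [hb' [mg bg]]].
  rewrite /J (E1 _ _ _ hb mf bf) (E1 _ _ _ hb' mg bg).
  apply: fine_le.
  + exact: (integrable_fin_num measurableT (Ig _ gf)).
  + exact: (integrable_fin_num measurableT (Ig _ gg)).
  apply: le_integral => //; [exact: (Ig _ gf) | exact: (Ig _ gg) | ].
  move=> x _; rewrite lee_fin; apply: I2; try exact: good_cons.
  by move=> l hl; apply: h; rewrite /= hl.
- move=> f g gf gg.
  have gfg := good_add _ _ gf gg.
  have := gf; case=> a [b [hb [mf bf]]]; have := gg; case=> a' [b' [hb' [mg bg]]].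
  have := gfg; case=> a'' [b'' [hb'' [mfg bfg]]].
  rewrite /J (E1 _ _ _ hb'' mfg bfg) (E1 _ _ _ hb mf bf) (E1 _ _ _ hb' mg bg).
  rewrite (eq_integral (fun x => (gx f x)%:E + (gx g x)%:E)); last first.
    by move=> x _; rewrite /gx (I3 _ _ (good_cons _ x gf) (good_cons _ x gg)).
  rewrite integralD //; [ | exact: (Ig _ gf) | exact: (Ig _ gg)].
  rewrite fineD //.
  + exact: (integrable_fin_num measurableT (Ig _ gf)).
  + exact: (integrable_fin_num measurableT (Ig _ gg)).
Qed.

Lemma keyA m : PA m.
Proof. elim: m => [|m IH]; [exact: PA0 | exact: PAS]. Qed.


Lemma J_ext m s f g : f =1 g -> J m s f = J m s g.
Proof. by move=> /funext ->. Qed.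

Lemma good_cst c : good (fun _ => c).
Proof.
exists (`|c|)%R, 0%R; split => //; split; first by move=> *; rewrite lexx.
by move=> l; rewrite mul0r addr0.
Qed.

Lemma iexp_cst m s c : iexp F m s (fun _ => c%:E) = c%:E.
Proof.
elim: m s => [//|m IH] s /=.
rewrite (eq_integral (fun x => (EFin \o cst c) x)); last by move=> x _; rewrite IH.
exact: intcst.
Qed.

Lemma J_cst m s c : J m s (fun _ => c) = c.
Proof. by rewrite /J iexp_cst. Qed.

Lemma J_addc m s c f : (s + m <= n)%N -> good f ->
  J m s (fun l => c + f l)%R = (c + J m s f)%R.
Proof.
move=> hs gf; have [_ [_ I3]] := keyA m s hs.
by rewrite (I3 _ _ (good_cst c) gf) J_cst.
Qed.

Lemma J_sum (I : Type) (r : seq I) (fs : I -> seq R -> R) m s :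
  (s + m <= n)%N -> (forall j, good (fs j)) ->
  good (fun l => \sum_(j <- r) fs j l)%R /\
  J m s (fun l => \sum_(j <- r) fs j l)%R = (\sum_(j <- r) J m s (fs j))%R.
Proof.
move=> hs gfs; have [_ [_ I3]] := keyA m s hs.
elim: r => [|j r [gr Jr]].
  split.
    have -> : (fun l => \sum_(j <- [::]) fs j l)%R = (fun _ => 0%R).
      by apply: funext => l; rewrite big_nil.
    exact: good_cst.
  rewrite big_nil (J_ext m s _ (fun _ => 0%R)); first exact: J_cst.
  by move=> l; rewrite big_nil.
split.
  have -> : (fun l => \sum_(j0 <- j :: r) fs j0 l)%R = (fun l => fs j l + \sum_(j0 <- r) fs j0 l)%R.
    by apply: funext => l; rewrite big_cons.
  exact: good_add.
rewrite big_cons -Jr -I3 //; apply: J_ext => l; by rewrite big_cons.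
Qed.

Lemma J_S m s f : (s + m.+1 <= n)%N -> good f ->
  J m.+1 s f = fine (\int[F s]_x (J m s.+1 (fun l => f (x :: l)))%:E).
Proof.
move=> hs gf; have hs' : (s.+1 + m <= n)%N by move: hs; clear; lia.
have [I1 _] := keyA m s.+1 hs'.
rewrite /J /=; congr fine; apply: eq_integral => x _.
have := good_cons _ x gf; case=> a [b [hb [mf bf]]].
by have [-> _] := I1 _ _ _ hb mf bf.
Qed.

End PartA.

Section PartB.
Variable (R : realType).

Definition psi (T x : R) : R := if (T <= x)%R then (x - T)%R else 0%R.

Lemma psi_ge0 T x : (0 <= psi T x)%R.
Proof. by rewrite /psi; case: ifP => // h; rewrite subr_ge0. Qed.

Lemma psi_nd T : {homo psi T : x y / (x <= y)%R}.
Proof.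
move=> x y xy; rewrite /psi; case: ifP => hx; case: ifP => hy //.
- by rewrite lerB.
- by move: hy; rewrite (le_trans hx xy).
- by rewrite subr_ge0.
Qed.

Lemma psi_bnd T x : (`|psi T x| <= `|T| + `|x|)%R.
Proof.
rewrite ger0_norm ?psi_ge0 // /psi; case: ifP => _; last by rewrite addr_ge0.
apply: le_trans (ler_norm _) _; rewrite [(`|T| + _)%R]addrC; exact: ler_normB.
Qed.
End PartB.

Arguments int_abs {R}.
Arguments cm_fin {R}.
Arguments int_lin {R}.
Arguments int_lin_val {R}.
Arguments all2_refl {R}.
Arguments mono {R}.
Arguments bnd {R}.
Arguments good {R}.
Arguments cm {R}.
Arguments J {R}.
Arguments mono_cons {R}.
Arguments bnd_cons {R}.
Arguments good_cons {R}.
Arguments good_add {R}.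
Arguments sum_ord_shift {R}.
Arguments PA {R}.
Arguments PA0 {R}.
Arguments PAS {R}.
Arguments keyA {R}.
Arguments J_ext {R}.
Arguments good_cst {R}.
Arguments iexp_cst {R}.
Arguments J_cst {R}.
Arguments J_addc {R}.
Arguments J_sum {R}.
Arguments J_S {R}.
Arguments psi {R}.
Arguments psi_bnd {R}.
Arguments psi_nd {R}.
Arguments psi_ge0 {R}.
Arguments all2_nth {R}.
Arguments nth_le_sum {R}.
Arguments ostat_mono {R}.
Arguments ostat_bnd {R}.
Arguments leR {R}.

Section PartC.
Variable (R : realType) (F : nat -> probability R R) (n : nat).
Hypothesis hmean : forall t, (t < n)%N -> (F t).-integrable setT (fun x : R => x%:E).

Definition aT (T : R) u := fine (\int[F u]_x (psi T x)%:E).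

Lemma psi_int (T : R) u : (u < n)%N -> (F u).-integrable setT (fun x => (psi T x)%:E).
Proof.
move=> un.
apply: (le_integrable _ _ _ (int_lin F n hmean u `|T|%R 1%R un)) => //.
  by apply/measurable_EFinP; apply: nondecreasing_measurable => //; exact: psi_nd.
move=> x _ /=; rewrite lee_fin mul1r; apply: le_trans (psi_bnd T x) _.
exact: ler_norm.
Qed.

Lemma psi_nth_good (T : R) t : good (fun l => psi T (nth 0%R l t)).
Proof.
exists `|T|%R, 1%R; split => //; split.
  by move=> l l' h; apply: psi_nd; exact: all2_nth.
move=> l; apply: le_trans (psi_bnd T _) _; rewrite mul1r lerD2l.
exact: nth_le_sum.
Qed.

Lemma J_psi (T : R) m : forall s t, (s + m <= n)%N -> (t < m)%N ->
  J F m s (fun l => psi T (nth 0%R l t)) = aT T (s + t).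
Proof.
elim: m => [//|m IH] s t hs ht.
rewrite (J_S F n hmean) //; last exact: psi_nth_good.
have sn : (s < n)%N by move: hs; clear; lia.
case: t ht => [|t] ht.
  rewrite addn0 /aT; congr fine; apply: eq_integral => x _.
  by rewrite (J_ext _ _ _ _ (fun _ => psi T x)) ?J_cst.
rewrite (eq_integral (fun x => (EFin \o cst (aT T (s.+1 + t))) x)).
  by rewrite intcst /= addSnnS.
move=> x _ /=; congr EFin.
have -> : J F m s.+1 (fun l => psi T (nth 0%R (x :: l) t.+1)) = J F m s.+1 (fun l => psi T (nth 0%R l t)) by [].
apply: IH; move: hs ht; clear; lia.
Qed.

Lemma y_good j : good (@y R j).
Proof.
exists 0%R, 1%R; split => //; split.
  by move=> l l' h; exact: ostat_mono.
by move=> l; rewrite add0r mul1r; exact: ostat_bnd.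
Qed.

Lemma le_psi (T x : R) : (x <= T + psi T x)%R.
Proof.
rewrite /psi; case: ifP => h; first by rewrite addrC subrK.
by rewrite addr0; move/negbT: h; rewrite -ltNge => /ltW.
Qed.

Lemma ysum_le (T : R) k (l : seq R) : (k <= size l)%N ->
  (\sum_(1 <= j < k.+1) y j l <=
     k%:R * T + \sum_(0 <= t < size l) psi T (nth 0%R l t))%R.
Proof.
move=> hk.
rewrite big_add1 /=.
set s := sort >=%R l.
have -> : (\sum_(0 <= i < k) y i.+1 l = \sum_(0 <= i < k) nth 0%R s i)%R by [].
apply: le_trans (_ : _ <= \sum_(0 <= i < k) (T + psi T (nth 0%R s i)))%R _.
  by apply: ler_sum => i _; exact: le_psi.
rewrite big_split /= sumr_const_nat subn0 mulr_natl lerD2l.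
have hsz : size s = size l by rewrite size_sort.
apply: le_trans (_ : _ <= \sum_(0 <= i < size l) psi T (nth 0%R s i))%R _.
  rewrite (@big_cat_nat _ _ _ k 0 (size l)) //= lerDl.
  by apply: sumr_ge0 => i _; exact: psi_ge0.
have p1 : perm_eq s l by rewrite perm_sort.
have e1 : (\sum_(0 <= i < size l) psi T (nth 0%R s i) = \sum_(x <- s) psi T x)%R.
  by rewrite [RHS](big_nth 0%R) hsz.
by rewrite e1 (perm_big _ p1) /= (big_nth 0%R).
Qed.

End PartC.

Arguments aT {R}.
Arguments psi_int {R}.
Arguments psi_nth_good {R}.
Arguments J_psi {R}.
Arguments y_good {R}.
Arguments le_psi {R}.
Arguments ysum_le {R}.

Section PartD0.
Variable (R : realType).

Lemma emeas_sumP (I : finType) (P : pred I) (h : I -> R -> \bar R) :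
  (forall j, measurable_fun setT (h j)) ->
  measurable_fun setT (fun v => \sum_(j in P) h j v).
Proof.
move=> mh.
have -> : (fun v => \sum_(j in P) h j v) =
    (fun v => \sum_(j <- index_enum I) (if j \in P then h j v else 0)).
  by apply: funext => v; rewrite big_mkcond.
by apply: emeasurable_sum => j; case: (j \in P).
Qed.

Lemma meas_prodP (I : finType) (P : pred I) (h : I -> R -> R) :
  (forall j, measurable_fun setT (h j)) ->
  measurable_fun setT (fun v => \prod_(j in P) h j v)%R.
Proof.
move=> mh.
have -> : (fun v => \prod_(j in P) h j v)%R =
    (fun v => \prod_(j <- index_enum I) (if j \in P then h j v else 1))%R.
  by apply: funext => v; rewrite big_mkcond.
elim: (index_enum I) => [|j r IH].
  have -> : (fun v : R => \prod_(j <- [::]) (if j \in P then h j v else 1))%R = cst 1%R.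
    by apply: funext => v; rewrite big_nil.
  exact: measurable_cst.
have -> : (fun v : R => \prod_(j0 <- j :: r) (if j0 \in P then h j0 v else 1))%R =
  ((fun v => if j \in P then h j v else 1) \* (fun v => \prod_(j0 <- r) (if j0 \in P then h j0 v else 1)))%R.
  by apply: funext => v; rewrite big_cons.
apply: measurable_funM => //; case: (j \in P) => //; exact: measurable_cst.
Qed.

Lemma psum1 (I : finType) (A : {set I}) (q : I -> R) :
  (\sum_(S in powerset A) \prod_(j in A) (if j \in S then q j else 1 - q j) = 1)%R.
Proof.
have H := @bigA_distr R 0%R 1%R *%R +%R I (fun j => if j \in A then q j else 0%R) (fun j => if j \in A then 1 - q j else 1)%R.
rewrite (_ : \prod_(i0 : I) _ = 1)%R in H; last first.
  apply: big1 => j _; case: (j \in A).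
    by change (q j + (1 - q j) = 1)%R; rewrite addrC subrK.
  by change (0 + 1 = 1 :> R)%R; rewrite add0r.
rewrite [RHS]H [RHS](bigID (fun S : {set I} => S \subset A)) /=.
rewrite [X in (_ = _ + X)%R]big1 ?addr0; last first.
  move=> S /subsetPn [j jS jA].
  by rewrite (bigD1 j) //= jS (negbTE jA) mul0r.
apply: eq_big => [S|S SA]; first by rewrite powersetE.
rewrite [LHS]big_mkcond /=; apply: eq_bigr => j _.
case jA: (j \in A) => //.
by case jS: (j \in S) => //; move: SA; rewrite powersetE => /fintype.subsetP /(_ _ jS); rewrite jA.
Qed.

End PartD0.

Lemma lower_int (R : realType) (mu : probability R R) (h L : R -> \bar R) :
  measurable_fun setT h -> mu.-integrable setT L -> (forall v, L v <= h v) ->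
  \int[mu]_v L v <= \int[mu]_v h v.
Proof.
move=> mh iL hL.
have mL := measurable_int _ iL.
rewrite integralE [leRHS]integralE; apply: leeB.
  apply: ge0_le_integral => //.
  - exact: measurable_funepos.
  - exact: measurable_funepos.
  - by move=> x _; apply: (funepos_le (D := setT)); [move=> y _; exact: hL | exact: in_setT].
apply: ge0_le_integral => //.
- exact: measurable_funeneg.
- exact: measurable_funeneg.
- by move=> x _; apply: (funeneg_le (D := setT)); [move=> y _; exact: hL | exact: in_setT].
Qed.

Section PartD.
Variables (R : realType) (F : nat -> probability R R) (n k : nat) (i : 'I_k)
  (p : profile R k) (T : R).
Hypothesis hmean : forall t, (t < n)%N -> (F t).-integrable setT (fun x : R => x%:E).
Hypothesis hp01 : forall j t v A, j != i -> (0 <= p j t v A <= 1)%R.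
Hypothesis hpmeas : forall j t A, j != i -> measurable_fun setT (fun v => p j t v A).

Local Notation pp := (upd p i (thr (k:=k) T%:E)).

Lemma pp_01 j t v A : (0 <= pp j t v A <= 1)%R.
Proof.
rewrite /upd; case: eqP => [_|/eqP ji]; last exact: hp01.
by rewrite /thr; case: ifP => _; rewrite ?lexx ?ler01.
Qed.

Lemma thr_nd : {homo (fun v : R => thr (k:=k) T%:E 0%N v finset.set0) : x y / (x <= y)%R}.
Proof.
move=> x y xy; rewrite /thr; case: ifP => hx; case: ifP => hy //.
by move: hy; rewrite (le_trans hx) // lee_fin.
Qed.

Lemma pp_meas j t A : measurable_fun setT (fun v => pp j t v A).
Proof.
rewrite /upd; case: eqP => [_|/eqP ji]; last exact: hpmeas.
exact: nondecreasing_measurable thr_nd.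
Qed.

Lemma psel_ge0 t v A S : (0 <= psel pp t v A S)%R.
Proof.
apply: prodr_ge0 => j _; have /andP[h0 h1] := pp_01 j t v A.
by case: (j \in S) => //; rewrite subr_ge0.
Qed.

Lemma psel_sum t v A : (\sum_(S in powerset A) psel pp t v A S = 1)%R.
Proof. exact: psum1. Qed.

Lemma psel_meas t A S : measurable_fun setT (fun v => psel pp t v A S).
Proof.
apply: meas_prodP => j; case: (j \in S); first exact: pp_meas.
apply: measurable_funB; [exact: measurable_cst | exact: pp_meas].
Qed.

Lemma psel_in t v (A S : {set 'I_k}) : i \in A -> i \in S -> psel pp t v A S != 0%R -> (T <= v)%R.
Proof.
move=> iA iS; rewrite /psel (bigD1 i) //= iS /upd eqxx /thr.
by case: ifP => [|_]; [rewrite lee_fin | rewrite mul0r eqxx].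
Qed.

Lemma psel_out t v (A S : {set 'I_k}) : i \in A -> i \notin S -> psel pp t v A S != 0%R -> psi T v = 0%R.
Proof.
move=> iA iS; rewrite /psel (bigD1 i) //= (negbTE iS) /upd eqxx /thr.
case: ifP => [|h]; first by rewrite subrr mul0r eqxx.
by move=> _; rewrite /psi; move: h; rewrite lee_fin => ->.
Qed.

Lemma pw (m t : nat) (A : {set 'I_k}) (M : R) (v : R) :
  i \in A -> (M <= T)%R ->
  (forall A' : {set 'I_k}, i \in A' -> M%:E <= util F pp i m t.+1 A') ->
  (M + psi T v / k%:R)%R%:E <= \sum_(S in powerset A) (psel pp t v A S)%:E *
        (if #|S| == 0%N then util F pp i m t.+1 A
         else \sum_(j in S) ((#|S|%:R)^-1)%:E *
                (if j == i then v%:E else util F pp i m t.+1 (A :\ j))).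
Proof.
move=> iA MT IH.
set Lr := (M + psi T v / k%:R)%R.
have kpos : (0 < k)%N by apply: leq_ltn_trans (ltn_ord i).
have -> : Lr%:E = \sum_(S in powerset A) (psel pp t v A S)%:E * Lr%:E.
  under eq_bigr do rewrite -EFinM.
  by rewrite sumEFin -mulr_suml psel_sum mul1r.
apply: lee_sum => S; rewrite powersetE => SA.
have [w0|w0] := eqVneq (psel pp t v A S) 0%R.
  by rewrite w0 !mul0e.
apply: lee_wpmul2l; first by rewrite lee_fin psel_ge0.
have hout : i \notin S -> psi T v = 0%R.
  by move=> h; exact: (psel_out t v A S iA h w0).
have cardS : (#|S| <= k)%N by rewrite -[X in (_ <= X)%N]card_ord; exact: max_card.
case: ifP => hS0.
  have iS : i \notin S by move: hS0; rewrite cards_eq0 => /eqP ->; rewrite finset.in_set0.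
  by rewrite /Lr (hout iS) mul0r addr0; exact: IH.
have Spos : (0 < #|S|)%N by rewrite lt0n hS0.
apply: le_trans (_ : _ <= \sum_(j in S) ((#|S|%:R)^-1)%:E *
   (M + (if j == i then psi T v else 0))%R%:E) _; last first.
  apply: lee_sum => j jS; apply: lee_wpmul2l; first by rewrite lee_fin invr_ge0 ler0n.
  case: eqP => [ji|/eqP ji].
    have iS : i \in S by rewrite -ji.
    have Tv := psel_in t v A S iA iS w0.
    rewrite /psi Tv lee_fin; lra.
  rewrite addr0; apply: IH; rewrite in_setD1 iA andbT eq_sym; exact: ji.
under eq_bigr do rewrite -EFinM.
rewrite sumEFin -mulr_sumr big_split /= sumr_const lee_fin.
have -> : (\sum_(j in S) (if j == i then psi T v else 0) = if i \in S then psi T v else 0)%R.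
  case: ifP => iS.
    rewrite (bigD1 i) //= eqxx big1 ?addr0 // => j /andP[_ ji].
    by rewrite (negbTE ji).
  apply: big1 => j jS; case: eqP => // ji.
  by move: iS; rewrite -ji jS.
set s := (#|S|%:R : R).
have s0 : (0 < s)%R by rewrite ltr0n.
rewrite mulrDr -mulr_natr mulrCA mulVf ?mulr1; last by rewrite gt_eqF.
rewrite /Lr lerD2l.
case: ifP => iS; last by rewrite (hout (negbT iS)) mul0r mulr0.
rewrite mulrC; apply: ler_wpM2r; first exact: psi_ge0.
rewrite lef_pV2 ?ler_nat // posrE ltr0n //.
Qed.

Lemma util_lb m : forall t (A : {set 'I_k}), (t + m <= n)%N -> i \in A ->
  (Num.min T ((\sum_(u < m) aT F T (t + u)%N) / k%:R))%R%:E <= util F pp i m t A.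
Proof.
elim: m => [|m IH] t A ht iA.
  by rewrite /= big_ord0 mul0r lee_fin ge_min lexx orbT.
rewrite /= iA /=.
have tn : (t < n)%N by move: ht; clear; lia.
have ht' : (t.+1 + m <= n)%N by move: ht; clear; lia.
set c := ((\sum_(u < m) aT F T (t.+1 + u)%N) / k%:R)%R.
set M := Num.min T c.
have MT : (M <= T)%R by rewrite /M ge_min lexx.
have IH' : forall A' : {set 'I_k}, i \in A' -> M%:E <= util F pp i m t.+1 A'.
  by move=> A' h; exact: IH _ _ ht' h.
have ipsi := psi_int F n hmean T t tn.
have int2 : (F t).-integrable setT (fun v => (EFin \o cst M) v + (k%:R^-1)%:E * (psi T v)%:E).
  by apply: integrableD => //; [exact: finite_measure_integrable_cst | exact: integrableZl].
have eqL : forall v, (EFin \o cst M) v + (k%:R^-1)%:E * (psi T v)%:E = (M + psi T v / k%:R)%R%:E.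
  by move=> v /=; rewrite mulrC EFinD EFinM.
have intL : (F t).-integrable setT (fun v => (M + psi T v / k%:R)%R%:E).
  by apply: eq_integrable int2 => // v _; exact: eqL.
have valL : \int[F t]_v (M + psi T v / k%:R)%R%:E = (M + aT F T t / k%:R)%R%:E.
  rewrite (eq_integral (fun v => (EFin \o cst M) v + (k%:R^-1)%:E * (psi T v)%:E)); last by move=> v _; rewrite eqL.
  rewrite integralD //; last exact: integrableZl.
    rewrite intcst integralZl // /aT EFinD EFinM fineK; last exact: (integrable_fin_num measurableT ipsi).
    by rewrite muleC.
  exact: finite_measure_integrable_cst.
have a0 : (0 <= aT F T t)%R.
  by rewrite /aT fine_ge0 // integral_ge0 // => v _; rewrite lee_fin psi_ge0.
apply: le_trans (_ : _ <= (M + aT F T t / k%:R)%R%:E) _.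
  rewrite lee_fin (sum_ord_shift (aT F T)) mulrDl /M.
  have a'0 : (0 <= aT F T t / k%:R)%R by rewrite divr_ge0.
  case: (leP T c) => hTc.
    by rewrite ge_min; apply/orP; left; rewrite lerDl.
  by rewrite ge_min; apply/orP; right; rewrite addrC.
rewrite -valL; apply: lower_int => //; last by move=> v; exact: pw.
apply: emeas_sumP => S.
apply: emeasurable_funM.
  by apply/measurable_EFinP; exact: psel_meas.
case: (#|S| == 0%N); first exact: measurable_cst.
apply: emeas_sumP => j; apply: measurable_funeM; case: (j == i); last exact: measurable_cst.
exact: EFin_measurable.
Qed.

End PartD.

Theorem mainTheorem2 (R : realType) (F : nat -> probability R R) (n k : nat)
  (i : 'I_k)
  (hnonneg : forall t, (t < n)%N -> F t [set x : R | (x < 0)%R]%classic = 0%E)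
  (hmean : forall t, (t < n)%N -> (F t).-integrable setT (fun x : R => x%:E))
  (hnk : (k <= n)%N)
  (p : profile R k)
  (hp01 : forall j t v A, j != i -> (0 <= p j t v A <= 1)%R)
  (hpmeas : forall j t A, j != i -> measurable_fun setT (fun v => p j t v A)) :
  utility F (upd p i (thr (k:=k) (Tk F n k))) i n >=
    (((2 * k)%N%:R)^-1)%R%:E *
      Exp F n (fun vs => ((\sum_(1 <= j < k.+1) y j vs)%R)%:E).
Proof.
have kpos : (0 < k)%N by apply: leq_ltn_trans (ltn_ord i).
have hn0 : (0 + n <= n)%N by [].
have [I1 [I2 I3]] := keyA F n hmean n 0%N hn0.
have Ey : forall j, Exp F n (fun vs => (y j vs)%:E) = (J F n 0%N (y j))%:E.
  move=> j; have := y_good (R:=R) j; case=> a [b [hb [mf bf]]].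
  by rewrite /Exp; have [-> _] := I1 _ _ _ hb mf bf.
have [gsum Jsum] := J_sum F n hmean _ (index_iota 1 k.+1) (fun j => @y R j) n 0%N hn0 (y_good (R:=R)).
set Y := (\sum_(j <- index_iota 1 k.+1) J F n 0%N (y j))%R.
have ETk : Tk F n k = (((2 * k)%N%:R)^-1 * Y)%R%:E.
  rewrite /Tk; under eq_bigr do rewrite Ey.
  by rewrite sumEFin EFinM.
set T := (((2 * k)%N%:R)^-1 * Y)%R.
rewrite ETk.
have ESum : Exp F n (fun vs => (\sum_(1 <= j < k.+1) y j vs)%R%:E) = Y%:E.
  have := gsum; case=> a [b [hb [mf bf]]].
  by rewrite /Exp; have [-> _] := I1 _ _ _ hb mf bf; rewrite Jsum.
rewrite ESum -EFinM -/T.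
apply: le_trans _ (util_lb _ F n k i p T hmean hp01 hpmeas n 0%N _ hn0 (finset.in_setT i)).
set G := (\sum_(u < n) aT F T (0 + u)%N)%R.
pose psis := (fun l : seq R => \sum_(t <- index_iota 0%N n) psi T (nth 0%R l t))%R.
have [gpsi Jpsi] := J_sum F n hmean _ (index_iota 0%N n) (fun t l => psi T (nth 0%R l t)) n 0%N hn0 (psi_nth_good T).
have JpsiG : J F n 0%N psis = G.
  rewrite /psis Jpsi /G -(big_mkord xpredT (fun u => aT F T (0 + u)%N)).
  apply: eq_big_nat => t /andP[_ tn]; exact: (J_psi F n hmean T n 0%N t hn0 tn).
have gK : good (fun l => k%:R * T + psis l)%R by apply: good_add; [exact: good_cst | exact: gpsi].
have le1 : (Y <= k%:R * T + G)%R.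
  have JY : J F n 0%N (fun l => \sum_(j <- index_iota 1 k.+1) y j l)%R = Y := Jsum.
  rewrite -JpsiG -(J_addc F n hmean) // -JY.
  apply: I2 => // l hl.
  have := ysum_le T k l; rewrite hl => /(_ hnk) H; exact: H.
have K0 : (0 < k%:R :> R)%R by rewrite ltr0n.
have hY : Y = (2 * k%:R * T)%R.
  rewrite /T natrM mulrA mulfV ?mul1r //.
  by rewrite mulf_neq0 // ?pnatr_eq0 // gt_eqF.
rewrite lee_fin le_min lexx /= ler_pdivlMr //.
move: le1; rewrite hY; nra.
Qed.
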